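(* Consider the Polyhedral Clinching Auction run on the modified market as described in the context. At the moment just before the clinching step of any iteration, with $x_i=w(E_i)$ for the current $w$ and $d$ the current demands, for every $S\subseteq N$, $$g_{x,d}(S)=\min_{S'\subseteq S}\{f(E_{S'})-x(S')+d(S\setminus S')\}.$$
   Context: Market model. Buyers $N_0=\{1,\dots,n\}$, sellers $M=\{1,\dots,m\}$, bipartite edge set $E_0\subseteq N_0\times M$; edge $(i,j)$ written $ij$; for a set $S$ of participants $E_S$ is the set of edges incident to a member of $S$ ($E_i=E_{\{i\}}$); $w(F)=\sum_{e\in F}w_e$. Each seller $j$ has a monotone submodular $f_j:2^{E_j}\to\mathbb R_+$, $f_j(\emptyset)=0$. Buyer $i$ has per-unit valuation $v_i>0$ and budget $B_i\ge0$; seller $j$ has per-unit valuation $\rho_j>0$. Modified market. For each seller $j$ add a virtual buyer $n+j$ adjacent only to $j$ with $v_{n+j}=\rho_j$, $B_{n+j}=\infty$; $N=\{1,\dots,n+m\}$, $E=E_0\cup\{(n+j)j\}$; extend $f_j$ by $f_j(F)=f_j(E_j)$ if $(n+j)j\in F$, unchanged otherwise; $P_j=\{y\in\mathbb R^{E_j}_+:y(F)\le f_j(F)\ \forall F\}$, $P=\{w\in\mathbb R^E_+:w|_{E_j}\in P_j\ \forall j\}$, $f(S)=\sum_jf_j(S\cap E_j)$. For $x\in\mathbb R^N_+$, $d\in[0,\infty]^N$ and $S\subseteq N$: $g_{x,d}(S)=\min_{S'\subseteq S}\bigl\{\min_{S'\subseteq S''\subseteq N}\{f(E_{S''})-x(S'')\}+d(S\setminus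 S')\bigr\}$. Polyhedral Clinching Auction (PCA) with step $\varepsilon>0$: bids $v'_i$ for $i\in N$ (virtual buyer $n+j$ bids seller $j$'s bid), all assumed to be positive integer multiples of $\varepsilon$. State: $w\in\mathbb R^E_+$, payments $p$, revenues $r$, price clocks $c_i$, demands $d_i\in[0,\infty]$; initially $w=0,p=0,r=0$, $c_i=0$, $d_i=\infty$, pointer $l=1$. For $w,d$ let $P_{w,d}=\{y\in\mathbb R^E_+: w+y\in P,\ y(E_k)\le d_k\ \forall k\}$ and for $\xi\in\mathbb R^{E_i}_+$ let $P^i_{w,d}(\xi)=\{u\in\mathbb R^{N\setminus\{i\}}_+:\exists y\in P_{w,d},\ y|_{E_i}=\xi,\ y(E_k)=u_k\ \forall k\ne i\}$. While some $d_i\neq 0$, an iteration does: (1) clinching step: for $i=1,\dots,n+m$ in turn, choose a maximal $\xi_i\in\mathbb R^{E_i}_+$ with $P^i_{w,d}(\xi_i)=P^i_{w,d}(0)$, set $p_i\leftarrow p_i+c_i\xi_i(E_i)$, $w_{ij}\leftarrow w_{ij}+\xi_{ij}$, and reset every demand to $d_k=(B_k-p_k)/c_k$ if $c_k<v'_k$ and $d_k=0$ otherwise ($d_k=\infty$ while $c_k=0$); then $r_j\leftarrow r_j+\sum_{ij\in E_j}c_i\xi_{ij}$; (2) $c_l\leftarrow c_l+\varepsilon$ and $d_l\leftarrow(B_l-p_l)/c_l$ if $c_l<v'_l$, else $d_l\leftarrow0$; (3) advance $l$ cyclically. *)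

(* Defs.v *)
From HB Require Import structures.
From mathcomp Require Import all_boot all_order all_algebra.
From mathcomp Require Import constructive_ereal.
Set Implicit Arguments. Unset Strict Implicit. Unset Printing Implicit Defensive.
Import Order.TTheory GRing.Theory Num.Theory.
Local Open Scope ring_scope.

(* Participants N = {1..n+m} are represented by 'I_(n+m):
   index i < n is buyer i (via lshift), index n + j is the virtual buyer of seller j (via rshift).
   Edges are pairs (participant, seller). *)
Section PCA.
Variable R : realFieldType.
Variables n m : nat.
Variable E0 : {set 'I_n * 'I_m}.
Variable f0 : 'I_m -> {set 'I_n * 'I_m} -> R.
Variable B : 'I_n -> R.
Variable bid : 'I_(n+m) -> R.                    (* bids v'_i (virtual buyer n+j bids seller j's bid) *)
Variable eps : R.

Definition Part := 'I_(n+m).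
Definition Edge := (Part * 'I_m)%type.

Definition buyer (i : 'I_n) : Part := lshift m i.
Definition virt (j : 'I_m) : Part := rshift n j.

Definition E0j (j : 'I_m) : {set 'I_n * 'I_m} := [set e in E0 | e.2 == j].

Definition E : {set Edge} :=
  [set e : Edge | match split e.1 with
                  | inl i => (i, e.2) \in E0
                  | inr j => j == e.2
                  end].

Definition Ek (k : Part) : {set Edge} := [set e in E | e.1 == k].
Definition ES (S : {set Part}) : {set Edge} := [set e in E | e.1 \in S].
Definition Ej (j : 'I_m) : {set Edge} := [set e in E | e.2 == j].

Definition fext (j : 'I_m) (F : {set Edge}) : R :=
  if (virt j, j) \in F then f0 j (E0j j)
  else f0 j [set e : 'I_n * 'I_m | (buyer e.1, e.2) \in F].

Definition f (F : {set Edge}) : R := \sum_(j < m) fext j (F :&: Ej j).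

Definition inP (w : Edge -> R) : Prop :=
  (forall e, e \in E -> 0 <= w e) /\
  (forall (j : 'I_m) (F : {set Edge}), F \subset Ej j -> \sum_(e in F) w e <= fext j F).

Definition inPwd (w : Edge -> R) (d : Part -> \bar R) (y : Edge -> R) : Prop :=
  (forall e, e \in E -> 0 <= y e) /\ inP (fun e => w e + y e) /\
  (forall k : Part, ((\sum_(e in Ek k) y e)%:E <= d k)%E).

(* u ∈ P^i_{w,d}(xi)  (u is indexed by N; its i-th coordinate is ignored) *)
Definition inPi (w : Edge -> R) (d : Part -> \bar R) (i : Part) (xi : Edge -> R) (u : Part -> R) : Prop :=
  (forall k, k != i -> 0 <= u k) /\
  exists y, inPwd w d y /\ (forall e, e \in Ek i -> y e = xi e) /\
            (forall k, k != i -> \sum_(e in Ek k) y e = u k).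

Definition validxi (i : Part) (xi : Edge -> R) : Prop :=
  (forall e, e \in Ek i -> 0 <= xi e) /\ (forall e, e \notin Ek i -> xi e = 0).

Definition clinchable w d i xi : Prop :=
  forall u, inPi w d i xi u <-> inPi w d i (fun _ => 0) u.

Definition maximal_xi w d i xi : Prop :=
  validxi i xi /\ clinchable w d i xi /\
  forall xi', validxi i xi' -> clinchable w d i xi' ->
    (forall e, e \in Ek i -> xi e <= xi' e) -> forall e, e \in Ek i -> xi' e = xi e.

Definition Bext (k : Part) : \bar R :=
  match split k with inl i => (B i)%:E | inr _ => +oo%E end.

Definition dem (c p : Part -> R) (k : Part) : \bar R :=
  if c k == 0 then +oo%E
  else if c k < bid k then ((Bext k - (p k)%:E) * ((c k)^-1)%:E)%E
  else 0%E.

Record state := State {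
  st_w : Edge -> R;
  st_p : Part -> R;
  st_r : 'I_m -> R;
  st_c : Part -> R;
  st_d : Part -> \bar R;
  st_l : Part }.

Definition clinch1 (i : Part) (s s' : state) : Prop :=
  exists xi, maximal_xi (st_w s) (st_d s) i xi /\
    st_p s' = (fun k => if k == i then st_p s k + st_c s i * \sum_(e in Ek i) xi e
                        else st_p s k) /\
    st_w s' = (fun e => st_w s e + xi e) /\
    st_d s' = dem (st_c s) (st_p s') /\
    st_r s' = (fun j => st_r s j + \sum_(e in Ek i :&: Ej j) st_c s i * xi e) /\
    st_c s' = st_c s /\ st_l s' = st_l s.

Definition clinch_all (s s' : state) : Prop :=
  exists seqs : nat -> state, seqs 0%N = s /\ seqs (n + m)%N = s' /\
    forall i : Part, clinch1 i (seqs i) (seqs i.+1).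

Definition price_step (s s' : state) : Prop :=
  let l := st_l s in
  let c' := fun k => if k == l then st_c s k + eps else st_c s k in
  st_w s' = st_w s /\ st_p s' = st_p s /\ st_r s' = st_r s /\
  st_c s' = c' /\
  st_d s' = (fun k => if k == l then dem c' (st_p s) k else st_d s k) /\
  st_l s' = ordS l.

(* states at the moment just before the clinching step of an iteration
   (together with the loop condition, checked separately) *)
Inductive iter_start : state -> Prop :=
| iter_init (l0 : Part) : nat_of_ord l0 = 0%N ->
    iter_start (State (fun _ => 0) (fun _ => 0) (fun _ => 0) (fun _ => 0) (fun _ => +oo%E) l0)
| iter_next s s1 s2 : iter_start s -> (exists k, st_d s k != 0%E) ->
    clinch_all s s1 -> price_step s1 s2 -> iter_start s2.

Definition xw (w : Edge -> R) (k : Part) : R := \sum_(e in Ek k) w e.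

Definition sumx (x : Part -> R) (S : {set Part}) : R := \sum_(k in S) x k.
Definition sumd (d : Part -> \bar R) (S : {set Part}) : \bar R := (\sum_(k in S) d k)%E.

Definition g (x : Part -> R) (d : Part -> \bar R) (S : {set Part}) : \bar R :=
  \big[Order.min/+oo%E]_(S' : {set Part} | S' \subset S)
     (\big[Order.min/+oo%E]_(S'' : {set Part} | S' \subset S'')
         (f (ES S'') - sumx x S'')%:E
      + sumd d (S :\: S'))%E.

Definition gsimple (x : Part -> R) (d : Part -> \bar R) (S : {set Part}) : \bar R :=
  \big[Order.min/+oo%E]_(S' : {set Part} | S' \subset S)
     ((f (ES S') - sumx x S')%:E + sumd d (S :\: S'))%E.

End PCA.

Definition monotone_on (R : realFieldType) (T : finType) (D : {set T}) (h : {set T} -> R) :=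
  forall A C : {set T}, A \subset C -> C \subset D -> h A <= h C.
Definition submodular_on (R : realFieldType) (T : finType) (D : {set T}) (h : {set T} -> R) :=
  forall A C : {set T}, A \subset D -> C \subset D -> h (A :|: C) + h (A :&: C) <= h A + h C.

(* Main.v *)
Require Import Defs.
From HB Require Import structures.
From mathcomp Require Import all_boot all_order all_algebra.
From mathcomp Require Import constructive_ereal.
From mathcomp Require Import lra ring.
Import Order.TTheory GRing.Theory Num.Theory.
Set Implicit Arguments. Unset Strict Implicit. Unset Printing Implicit Defensive.
Local Open Scope ring_scope.

Section PI.
Variable R : realFieldType.
Variable X : finType.

Definition polym (D : {set X}) (r : {set X} -> R) :=
  [/\ r set0 = 0,
      forall A C : {set X}, A \subset C -> C \subset D -> r A <= r C &
      forall A C : {set X}, A \subset D -> C \subset D -> r (A :|: C) + r (A :&: C) <= r A + r C].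

Lemma min_lel (x y : R) : Num.min x y <= x. Proof. by rewrite ge_min lexx. Qed.
Lemma min_ler (x y : R) : Num.min x y <= y. Proof. by rewrite ge_min lexx orbT. Qed.

Definition contr (r : {set X} -> R) e t A := Num.min (r A) (r (e |: A) - t).

Lemma notin_D1 (D A : {set X}) e : A \subset D :\ e -> e \notin A.
Proof. by move=> sA; apply/negP => /(subsetP sA); rewrite !inE eqxx. Qed.

Lemma sub_D1 (D A : {set X}) e : A \subset D :\ e -> A \subset D.
Proof. by move=> sA; apply: subset_trans sA (subD1set _ _). Qed.

Lemma subU1 (D A : {set X}) e : e \in D -> A \subset D :\ e -> e |: A \subset D.
Proof. by move=> eD sA; rewrite subUset sub1set eD (sub_D1 sA). Qed.

Lemma polym_contr D r e t : polym D r -> e \in D -> t <= r [set e] ->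
  polym (D :\ e) (contr r e t).
Proof.
move=> [r0 rmon rsub] eD te; split.
- by rewrite /contr setU0 r0 min_l // subr_ge0.
- move=> A C sAC sC; rewrite /contr le_min !ge_min.
  have sCD := sub_D1 sC.
  apply/andP; split.
    by rewrite rmon //= ?(subset_trans sAC sCD).
  by rewrite lerD2r rmon ?orbT //= ?setUS // (subU1 eD sC).
- move=> A C sA sC; rewrite /contr.
  have eA := notin_D1 sA; have eC := notin_D1 sC.
  have sAD := sub_D1 sA; have sCD := sub_D1 sC.
  have sAe := subU1 eD sA; have sCe := subU1 eD sC.
  have E1 : (e |: A) :|: (e |: C) = e |: (A :|: C).
    by apply/setP => x; rewrite !inE; case: (x == e).
  have E2 : (e |: A) :&: (e |: C) = e |: (A :&: C).
    by apply/setP => x; rewrite !inE; case: (x == e).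
  have E3 : A :|: (e |: C) = e |: (A :|: C).
    by apply/setP => x; rewrite !inE; case: (x == e); rewrite ?orbT.
  have E4 : A :&: (e |: C) = A :&: C.
    apply/setP => x; rewrite !inE; case: eqP => [->|]; last by [].
    by rewrite (negbTE eA).
  have E5 : (e |: A) :|: C = e |: (A :|: C).
    by apply/setP => x; rewrite !inE; case: (x == e).
  have E6 : (e |: A) :&: C = A :&: C.
    apply/setP => x; rewrite !inE; case: eqP => [->|]; last by []. 
    by rewrite (negbTE eC) andbF /=; case: (e \in A).

  have [hA|hA] := leP (r A) (r (e |: A) - t);
  have [hC|hC] := leP (r C) (r (e |: C) - t).
  +
    apply: le_trans (rsub _ _ sAD sCD).
    by apply: lerD; rewrite ge_min lexx.
  +
    apply: (@le_trans _ _ (r (e |: (A :|: C)) - t + r (A :&: C))).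
      by apply: lerD; rewrite ge_min lexx ?orbT.
    have := rsub _ _ sAD sCe; rewrite E3 E4 => h.
    lra.
  +
    apply: (@le_trans _ _ (r (e |: (A :|: C)) - t + r (A :&: C))).
      by apply: lerD; rewrite ge_min lexx ?orbT.
    have := rsub _ _ sAe sCD; rewrite E5 E6 => h.
    lra.
  +
    apply: (@le_trans _ _ (r (e |: (A :|: C)) - t + (r (e |: (A :&: C)) - t))).
      by apply: lerD; rewrite ge_min lexx ?orbT.
    have := rsub _ _ sAe sCe; rewrite E1 E2 => h.
    lra.
Qed.

Lemma sum_D1 (A : {set X}) e (F : X -> R) : e \in A ->
  \sum_(x in A) F x = F e + \sum_(x in A :\ e) F x.
Proof.
move=> eA; rewrite (bigD1 e) //=; congr (_ + _).
by apply: eq_bigl => x; rewrite !inE andbC.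
Qed.

Lemma polym_ge0 D r (A : {set X}) : polym D r -> A \subset D -> 0 <= r A.
Proof. by move=> [r0 rm _] sA; rewrite -r0 rm ?sub0set. Qed.

Lemma PI_ind k : forall (D : {set X}), #|D| = k -> forall r1 r2 mu,
  polym D r1 -> polym D r2 ->
  (forall A : {set X}, A \subset D -> mu <= r1 A + r2 (D :\: A)) ->
  exists y : X -> R,
   [/\ forall x, 0 <= y x, forall x, x \notin D -> y x = 0,
       forall A : {set X}, A \subset D -> \sum_(x in A) y x <= r1 A,
       forall A : {set X}, A \subset D -> \sum_(x in A) y x <= r2 A &
       mu <= \sum_(x in D) y x].
Proof.
elim: k => [|k IH] D cD r1 r2 mu p1 p2 cut.
  have D0 : D = set0 by apply/eqP; rewrite -cards_eq0 cD.
  subst D; exists (fun _ => 0); split => //.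
  - by move=> A sA; rewrite big1 // (polym_ge0 p1 sA).
  - by move=> A sA; rewrite big1 // (polym_ge0 p2 sA).
  - have := cut set0 (sub0set _); rewrite setD0 big1 //.
    by case: p1 => -> _ _; case: p2 => -> _ _; rewrite addr0.
have [e eD] : exists e, e \in D.
  by apply/set0Pn; rewrite -card_gt0 cD.
set D' := D :\ e.
have cD' : #|D'| = k by move: cD; rewrite (cardsD1 e) eD add1n => -[].
pose t := \big[Num.max/0]_(A : {set X} | A \subset D') (mu - r1 A - r2 (D' :\: A)).
have t0 : 0 <= t by apply: bigmax_ge_id.
have tlow : forall A : {set X}, A \subset D' -> mu - r1 A - r2 (D' :\: A) <= t.
  by move=> A sA; exact: (le_bigmax_cond 0 (fun A0 : {set X} => mu - r1 A0 - r2 (D' :\: A0)) sA).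
have tup : forall m, 0 <= m -> (forall A : {set X}, A \subset D' -> mu - r1 A - r2 (D' :\: A) <= m) -> t <= m.
  by move=> m m0 H; apply: bigmax_le.
case: (p1) => r10 r1m r1s; case: (p2) => r20 r2m r2s.
have S1 : forall A : {set X}, A \subset D' -> D :\: (e |: A) = D' :\: A.
  by move=> A sA; apply/setP => x; rewrite !inE negb_or andbA [~~ _ && ~~ _]andbC.
have S2 : forall A : {set X}, A \subset D' -> D :\: A = e |: (D' :\: A).
  move=> A sA; have eA := notin_D1 sA; apply/setP => x; rewrite !inE.
  by case: eqP => [->|]; rewrite ?eD ?(negbTE eA).
have sD'D : D' \subset D by apply: subD1set.
have seD : [set e] \subset D by rewrite sub1set.
have te1 : t <= r1 [set e].
  apply: tup; first by apply: (polym_ge0 p1).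
  move=> A sA; have := cut _ (subU1 eD sA); rewrite S1 //.
  have := r1s _ _ (sub_D1 sA) seD.
  have -> : A :&: [set e] = set0.
    by apply/setP => x; rewrite !inE; case: eqP => [->|]; rewrite ?(negbTE (notin_D1 sA)) ?andbF.
  rewrite r10 setUC => h1 h2; lra.
have te2 : t <= r2 [set e].
  apply: tup; first by apply: (polym_ge0 p2).
  move=> A sA; have := cut _ (sub_D1 sA); rewrite S2 //.
  have sDA : D' :\: A \subset D by apply: subset_trans (subsetDl _ _) sD'D.
  have := r2s _ _ sDA seD.
  have -> : (D' :\: A) :&: [set e] = set0.
    by apply/setP => x; rewrite !inE; case: eqP => [->|]; rewrite ?eqxx ?andbF.
  rewrite r20 setUC => h1 h2; lra.
have q1 := polym_contr p1 eD te1.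
have q2 := polym_contr p2 eD te2.
have cut' : forall A : {set X}, A \subset D' -> mu - t <= contr r1 e t A + contr r2 e t (D' :\: A).
  move=> A sA; rewrite /contr.
  have sDA : D' :\: A \subset D' by apply: subsetDl.
  have c1 := cut _ (sub_D1 sA); rewrite S2 // in c1.
  have c2 := cut _ (subU1 eD sA); rewrite S1 // in c2.
  have l1 := tlow _ sA.
  have [hA|hA] := leP (r1 A) (r1 (e |: A) - t);
  have [hC|hC] := leP (r2 (D' :\: A)) (r2 (e |: (D' :\: A)) - t); try lra.
  suff : t <= r1 (e |: A) + r2 (e |: (D' :\: A)) - mu by lra.
  apply: tup.
    have := r2m (D :\: (e |: A)) (e |: (D' :\: A)).
    rewrite S1 // => h; have := h (subsetUr _ _) (subU1 eD sDA); lra.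
  move=> B sB.
  have sAB : A :&: B \subset D' by apply: subset_trans (subsetIl _ _) sA.
  have sAUB : A :|: B \subset D' by rewrite subUset sA sB.
  have u1 := r1s _ _ (subU1 eD sA) (sub_D1 sB).
  have E1 : (e |: A) :|: B = e |: (A :|: B).
    by apply/setP => x; rewrite !inE orbA.
  have E2 : (e |: A) :&: B = A :&: B.
    apply/setP => x; rewrite !inE; case: eqP => [->|] //=.
    by rewrite (negbTE (notin_D1 sB)) andbF.
  rewrite E1 E2 in u1.
  have sDB : D' :\: B \subset D by apply: subset_trans (subsetDl _ _) sD'D.
  have u2 := r2s _ _ (subU1 eD sDA) sDB.
  have E3 : (e |: (D' :\: A)) :|: (D' :\: B) = e |: (D' :\: (A :&: B)).
    by apply/setP => x; rewrite !inE; case: (x == e); case: (x \in A); case: (x \in B); case: (x \in D).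
  have E4 : (e |: (D' :\: A)) :&: (D' :\: B) = D' :\: (A :|: B).
    apply/setP => x; rewrite !inE; case: eqP => [->|] /=; last first.
      by case: (x \in A); case: (x \in B); case: (x \in D).
    by rewrite /= !andbF.
  rewrite E3 E4 in u2.
  have c3 := cut _ (sub_D1 sAB); rewrite S2 // in c3.
  have c4 := cut _ (subU1 eD sAUB); rewrite S1 // in c4.
  lra.
have [y' [y0 yD yr1 yr2 ymu]] := IH D' cD' _ _ _ q1 q2 cut'.
exists (fun x => y' x + (if x == e then t else 0)); split.
- by move=> x; case: eqP => _; rewrite ?addr0 // addr_ge0.
- move=> x xD; rewrite yD; last by rewrite !inE negb_and xD orbT.
  by case: eqP => [xe|_]; rewrite ?addr0 //; move: xD; rewrite xe eD.
- have y'e : y' e = 0 by rewrite yD // !inE eqxx.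
  move=> A sA; rewrite big_split /=.
  case: (boolP (e \in A)) => eA.
    rewrite (sum_D1 _ eA) [X in _ + X](sum_D1 _ eA) eqxx y'e add0r.
    rewrite [\sum_(x in A :\ e) (if _ then _ else _)]big1 => [|x]; last by rewrite !inE => /andP[/negbTE ->].
    have sAe : A :\ e \subset D' by apply: setSD.
    have := yr1 _ sAe; rewrite /contr setD1K // => h.
    have := le_trans h (min_ler _ _); lra.
  rewrite [X in _ + X]big1 => [|x xA]; last first.
    by case: eqP => // xe; move: xA; rewrite xe (negbTE eA).
  have sAe : A \subset D' by apply/subsetP => x xA; rewrite !inE (subsetP sA) // andbT; apply: contraNneq eA => <-.
  have := yr1 _ sAe; rewrite /contr addr0 => h; exact: le_trans h (min_lel _ _).
- have y'e : y' e = 0 by rewrite yD // !inE eqxx.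
  move=> A sA; rewrite big_split /=.
  case: (boolP (e \in A)) => eA.
    rewrite (sum_D1 _ eA) [X in _ + X](sum_D1 _ eA) eqxx y'e add0r.
    rewrite [\sum_(x in A :\ e) (if _ then _ else _)]big1 => [|x]; last by rewrite !inE => /andP[/negbTE ->].
    have sAe : A :\ e \subset D' by apply: setSD.
    have := yr2 _ sAe; rewrite /contr setD1K // => h.
    have := le_trans h (min_ler _ _); lra.
  rewrite [X in _ + X]big1 => [|x xA]; last first.
    by case: eqP => // xe; move: xA; rewrite xe (negbTE eA).
  have sAe : A \subset D' by apply/subsetP => x xA; rewrite !inE (subsetP sA) // andbT; apply: contraNneq eA => <-.
  have := yr2 _ sAe; rewrite /contr addr0 => h; exact: le_trans h (min_lel _ _).
- have y'e : y' e = 0 by rewrite yD // !inE eqxx.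
  rewrite big_split /= (sum_D1 _ eD) [X in _ + X](sum_D1 _ eD) eqxx y'e add0r.
  rewrite [\sum_(x in D :\ e) (if _ then _ else _)]big1 => [|x]; last by rewrite !inE => /andP[/negbTE ->].
  lra.
Qed.

Lemma PI (D : {set X}) r1 r2 mu :
  polym D r1 -> polym D r2 ->
  (forall A : {set X}, A \subset D -> mu <= r1 A + r2 (D :\: A)) ->
  exists y : X -> R,
   [/\ forall x, 0 <= y x, forall x, x \notin D -> y x = 0,
       forall A : {set X}, A \subset D -> \sum_(x in A) y x <= r1 A,
       forall A : {set X}, A \subset D -> \sum_(x in A) y x <= r2 A &
       mu <= \sum_(x in D) y x].
Proof. exact: (@PI_ind #|D| D erefl). Qed.

End PI.

Section Market.
Variable R : realFieldType.
Variables n m : nat.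
Variable E0 : {set 'I_n * 'I_m}.
Variable f0 : 'I_m -> {set 'I_n * 'I_m} -> R.
Hypothesis f00 : forall j, f0 j set0 = 0.
Hypothesis f0ge0 : forall j (F : {set 'I_n * 'I_m}), F \subset E0j E0 j -> 0 <= f0 j F.
Hypothesis f0mon : forall j, monotone_on (E0j E0 j) (f0 j).
Hypothesis f0sub : forall j, submodular_on (E0j E0 j) (f0 j).

Local Notation EE := (E E0).
Local Notation Ekk := (Ek E0).
Local Notation ESS := (ES E0).
Local Notation Ejj := (Ej E0).
Local Notation fx := (fext E0 f0).
Local Notation ff := (f E0 f0).
Local Notation Edg := (Edge n m).
Local Notation Prt := (Part n m).
Implicit Types (A C D F Z : {set Edg}) (S T U : {set Prt}).

Lemma lemaxr (x y : R) : y <= Num.max x y. Proof. by rewrite le_max lexx orbT. Qed.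
Lemma lemaxl (x y : R) : x <= Num.max x y. Proof. by rewrite le_max lexx. Qed.

Lemma split_buyer (i : 'I_n) : split (@buyer n m i) = inl i.
Proof. by rewrite /buyer -[lshift m i]/(unsplit (inl i)) unsplitK. Qed.
Lemma split_virt (j : 'I_m) : split (@virt n m j) = inr j.
Proof. by rewrite /virt -[rshift n j]/(unsplit (inr j)) unsplitK. Qed.

Lemma inEk e k : (e \in Ekk k) = (e \in EE) && (e.1 == k).
Proof. by rewrite /Ek [in LHS]inE. Qed.
Lemma inES e S : (e \in ESS S) = (e \in EE) && (e.1 \in S).
Proof. by rewrite /ES [in LHS]inE. Qed.
Lemma inEj e j : (e \in Ejj j) = (e \in EE) && (e.2 == j).
Proof. by rewrite /Ej [in LHS]inE. Qed.

Lemma Ek_sub k : Ekk k \subset EE.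
Proof. by apply/subsetP => e; rewrite inE => /andP[]. Qed.
Lemma ES_sub S : ESS S \subset EE.
Proof. by apply/subsetP => e; rewrite inE => /andP[]. Qed.
Lemma ES_sub_mono S T : S \subset T -> ESS S \subset ESS T.
Proof. by move=> sST; apply/subsetP => e; rewrite !inES => /andP[-> /(subsetP sST)]. Qed.
Lemma Ej_sub j : Ejj j \subset EE.
Proof. by apply/subsetP => e; rewrite inE => /andP[]. Qed.

Definition img (F : {set Edg}) : {set 'I_n * 'I_m} :=
  [set e : 'I_n * 'I_m | (@buyer n m e.1, e.2) \in F].

Lemma img_sub j F : F \subset Ejj j -> img F \subset E0j E0 j.
Proof.
move=> sF; apply/subsetP => [[i j']]; rewrite !inE /= => /(subsetP sF).
by rewrite !inE /= split_buyer.
Qed.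
Lemma imgU A C : img (A :|: C) = img A :|: img C.
Proof. by apply/setP => e; rewrite !inE. Qed.
Lemma imgI A C : img (A :&: C) = img A :&: img C.
Proof. by apply/setP => e; rewrite !inE. Qed.
Lemma img0 : img set0 = set0.
Proof. by apply/setP => e; rewrite !inE. Qed.
Lemma imgS A C : A \subset C -> img A \subset img C.
Proof. by move=> sAC; apply/subsetP => e; rewrite !inE => /(subsetP sAC). Qed.

Lemma fext0 j : fx j set0 = 0.
Proof. by rewrite /fext inE -/(img set0) img0 f00. Qed.

Lemma E0j_sub j : E0j E0 j \subset E0j E0 j. Proof. by []. Qed.

Lemma fext_ge0 j F : F \subset Ejj j -> 0 <= fx j F.
Proof.
move=> sF; rewrite /fext; case: ifP => _; first exact: f0ge0.
exact/f0ge0/img_sub/sF.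
Qed.

Lemma fext_mon j A C : A \subset C -> C \subset Ejj j -> fx j A <= fx j C.
Proof.
move=> sAC sC; have sA := subset_trans sAC sC.
rewrite /fext -/(img A) -/(img C).
case: ifP => vA; first by rewrite (subsetP sAC _ vA).
case: ifP => vC; first by apply: f0mon => //; exact: img_sub sA.
by apply: f0mon; [exact: imgS | exact: img_sub sC].
Qed.

Lemma fext_sub j A C : A \subset Ejj j -> C \subset Ejj j ->
  fx j (A :|: C) + fx j (A :&: C) <= fx j A + fx j C.
Proof.
move=> sA sC; rewrite /fext -!/(img _) imgU imgI !inE.
have iA := img_sub sA; have iC := img_sub sC.
case vA : ((@virt n m j, j) \in A); case vC : ((@virt n m j, j) \in C) => /=.
- by rewrite lexx.
- have := f0mon (subsetIr (img A) (img C)) iC; lra.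
- have := f0mon (subsetIl (img A) (img C)) iA; lra.
- exact: f0sub.
Qed.

Lemma sum_E_part (F : Edg -> R) Z : Z \subset EE ->
  \sum_(e in Z) F e = \sum_(j < m) \sum_(e in Z :&: Ejj j) F e.
Proof.
move=> sZ; rewrite (partition_big (fun e : Edg => e.2) predT) //=.
apply: eq_bigr => j _; apply: eq_bigl => e; rewrite inE inEj.
by case eZ : (e \in Z) => //=; move: (subsetP sZ e eZ); rewrite inE => ->.
Qed.

Lemma sum_ES (F : Edg -> R) S :
  \sum_(e in ESS S) F e = \sum_(k in S) \sum_(e in Ekk k) F e.
Proof.
rewrite (partition_big (fun e : Edg => e.1) (mem S)) => [|e]; last by rewrite inES => /andP[].
apply: eq_bigr => k kS; apply: eq_bigl => e; rewrite inES inEk.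
by case: (e.1 =P k) => [->|_]; rewrite ?eqxx ?kS ?andbT ?andbF //; case: (_ \in _).
Qed.

Lemma sumx_xw (w : Edg -> R) S : sumx (xw E0 w) S = \sum_(e in ESS S) w e.
Proof. by rewrite sum_ES. Qed.

Lemma f_Ej j F : F \subset Ejj j -> ff F = fx j F.
Proof.
move=> sF; rewrite /f (bigD1 j) //= big1 ?addr0 => [|j' j'j].
  by congr (fx j _); apply/setIidPl.
suff -> : F :&: Ejj j' = set0 by apply: fext0.
apply/setP => e; rewrite !inE; case eF : (e \in F) => //=.
move: (subsetP sF e eF); rewrite !inE => /andP[-> /eqP ->] /=.
by rewrite eq_sym (negbTE j'j).
Qed.

Lemma f0set : ff set0 = 0.
Proof. by rewrite /f big1 // => j _; rewrite set0I fext0. Qed.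

Lemma f_mon Z1 Z2 : Z1 \subset Z2 -> ff Z1 <= ff Z2.
Proof.
move=> s12; apply: ler_sum => j _; apply: fext_mon; first exact: setSI.
exact: subsetIr.
Qed.

Lemma f_sub Z1 Z2 : ff (Z1 :|: Z2) + ff (Z1 :&: Z2) <= ff Z1 + ff Z2.
Proof.
rewrite /f -!big_split /=; apply: ler_sum => j _.
rewrite setIUl -[Ejj j]setIid setIACA setIid.
by apply: fext_sub; exact: subsetIr.
Qed.

Lemma sum_mod (w : Edg -> R) Z1 Z2 :
  \sum_(e in Z1 :|: Z2) w e + \sum_(e in Z1 :&: Z2) w e =
  \sum_(e in Z1) w e + \sum_(e in Z2) w e.
Proof.
rewrite ![\sum_(e in _) w e]big_mkcond -!big_split /=.
apply: eq_bigr => e _; rewrite !inE.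
by case: (e \in Z1); case: (e \in Z2); rewrite /= ?addr0 ?add0r.
Qed.

Definition phi (w : Edg -> R) Z := ff Z - \sum_(e in Z) w e.

Lemma phi_sub w Z1 Z2 : phi w (Z1 :|: Z2) + phi w (Z1 :&: Z2) <= phi w Z1 + phi w Z2.
Proof. rewrite /phi; have := f_sub Z1 Z2; have := sum_mod w Z1 Z2; lra. Qed.

Lemma inP_sum w Z : inP E0 f0 w -> Z \subset EE -> \sum_(e in Z) w e <= ff Z.
Proof.
move=> [_ wP] sZ; rewrite sum_E_part //; apply: ler_sum => j _.
apply: wP; exact: subsetIr.
Qed.

Lemma phi_ge0 w Z : inP E0 f0 w -> Z \subset EE -> 0 <= phi w Z.
Proof. by move=> wP sZ; rewrite /phi subr_ge0 inP_sum. Qed.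

Definition r1 (w : Edg -> R) A := phi w [arg min_(Z < EE | (A \subset Z) && (Z \subset EE)) phi w Z]%O.

Lemma r1_spec (w : Edg -> R) A : A \subset EE -> exists Z,
  [/\ A \subset Z, Z \subset EE, r1 w A = phi w Z &
      forall Z', A \subset Z' -> Z' \subset EE -> phi w Z <= phi w Z'].
Proof.
move=> sA; rewrite /r1; case: arg_minP; first by rewrite sA subxx.
move=> Z /andP[sAZ sZ] H; exists Z; split => // Z' s1 s2.
by apply: H; rewrite s1 s2.
Qed.

Lemma r1_polym (w : Edg -> R) D : inP E0 f0 w -> D \subset EE -> polym D (r1 w).
Proof.
move=> wP sD; split.
- have [Z [_ sZ -> H]] := r1_spec w (sub0set EE).
  apply/eqP; rewrite eq_le phi_ge0 // andbT.
  by apply: le_trans (H _ (sub0set _) (sub0set _)) _; rewrite /phi f0set big_set0 subr0.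
- move=> A C sAC sCD; have sC := subset_trans sCD sD.
  have [Z [sCZ sZ -> _]] := r1_spec w sC.
  have [Z' [_ _ -> H]] := r1_spec w (subset_trans sAC sC).
  by apply: H => //; exact: subset_trans sAC sCZ.
- move=> A C sAD sCD; have sA := subset_trans sAD sD; have sC := subset_trans sCD sD.
  have [Z1 [sAZ sZ1 -> _]] := r1_spec w sA.
  have [Z2 [sCZ sZ2 -> _]] := r1_spec w sC.
  have sU : A :|: C \subset EE by rewrite subUset sA.
  have sI : A :&: C \subset EE by apply: subset_trans (subsetIl _ _) sA.
  have [Z3 [_ _ -> H3]] := r1_spec w sU.
  have [Z4 [_ _ -> H4]] := r1_spec w sI.
  apply: le_trans (phi_sub w Z1 Z2); apply: lerD.
    by apply: H3; [exact: setUSS | rewrite subUset sZ1].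
  by apply: H4; [exact: setISS | apply: subset_trans (subsetIl _ _) sZ1].
Qed.

Definition meets A (k : Prt) := [exists e in A, e.1 == k].

Lemma meetsU A C k : meets (A :|: C) k = meets A k || meets C k.
Proof.
apply/existsP/orP => [[e /andP[]]|[/existsP[e /andP[eA ek]]|/existsP[e /andP[eC ek]]]].
- by rewrite inE => /orP[eA|eC] ek; [left|right]; apply/existsP; exists e; rewrite ?eA ?eC.
- by exists e; rewrite inE eA.
- by exists e; rewrite inE eC orbT.
Qed.

Lemma meetsS A C k : A \subset C -> meets A k -> meets C k.
Proof.
move=> sAC /existsP[e /andP[eA ek]]; apply/existsP; exists e.
by rewrite (subsetP sAC _ eA).
Qed.

Definition r2 (cap : Prt -> R) A := \sum_(k : Prt) (if meets A k then cap k else 0).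

Lemma r2_polym cap D : (forall k, 0 <= cap k) -> polym D (r2 cap).
Proof.
move=> c0; split.
- rewrite /r2 big1 // => k _; case: ifP => // /existsP[e]; by rewrite inE.
- move=> A C sAC _; apply: ler_sum => k _.
  case: ifP => mA; first by rewrite (meetsS sAC mA).
  by case: ifP.
- move=> A C _ _; rewrite /r2 -!big_split; apply: ler_sum => k _ /=.
  rewrite meetsU.
  have hI : meets (A :&: C) k -> meets A k && meets C k.
    by move=> h; rewrite (meetsS (subsetIl _ _) h) (meetsS (subsetIr _ _) h).
  case: (meets A k) hI; case: (meets C k); case: (meets (A :&: C) k) => //= hI;
    rewrite ?addr0 ?add0r ?lexx //; try by have := hI erefl.
  + by rewrite lerDl.
Qed.

Lemma sum_off (y : Edg -> R) F D : (forall e, e \notin D -> y e = 0) ->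
  \sum_(e in F) y e = \sum_(e in F :&: D) y e.
Proof.
move=> yD; rewrite (big_setID D) /= [X in _ + X]big1 ?addr0 // => e.
by rewrite !inE => /andP[eD _]; apply: yD.
Qed.

Lemma MF (w : Edg -> R) (d : Prt -> \bar R) S mu :
  inP E0 f0 w -> (forall k, (0 <= d k)%E) ->
  (forall S', S' \subset S -> forall Z, ESS S' \subset Z -> Z \subset EE ->
     (mu%:E <= (phi w Z)%:E + sumd d (S :\: S'))%E) ->
  exists y, [/\ inPwd E0 f0 w d y, forall e, e \notin ESS S -> y e = 0 &
                mu <= \sum_(e in ESS S) y e].
Proof.
move=> wP d0 cut.
pose cap k := if d k is EFin r then r else Num.max mu 0.
have cap0 : forall k, 0 <= cap k.
  move=> k; rewrite /cap; case: (d k) (d0 k) => [r||] h //; exact: lemaxr.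

have sD := ES_sub S.
have cutA : forall A : {set Edg}, A \subset ESS S -> mu <= r1 w A + r2 cap (ESS S :\: A).
  move=> A sA.
  have sAE := subset_trans sA sD.
  set S' := [set k in S | Ekk k \subset A].
  have [Z [sAZ sZ -> _]] := r1_spec w sAE.
  have sS' : S' \subset S by apply/subsetP => k; rewrite inE => /andP[].
  have sES' : ESS S' \subset Z.
    apply/subsetP => e; rewrite inES => /andP[eE]; rewrite inE => /andP[_ sk].
    by apply: (subsetP sAZ); apply: (subsetP sk); rewrite inEk eE eqxx.
  have c := cut _ sS' _ sES' sZ.
  have p0 := phi_ge0 wP sZ.
  have capS : \sum_(k in S :\: S') cap k <= r2 cap (ESS S :\: A).
    rewrite /r2 [X in _ <= X](bigID (mem (S :\: S'))) /= -[X in X <= _]addr0.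
    apply: lerD; last by apply: sumr_ge0 => k _; case: ifP.
    apply: ler_sum => k; rewrite in_setD => /andP[kS' kS].
    suff -> : meets (ESS S :\: A) k by [].
    move: kS'; rewrite inE kS /= => /subsetPn[e ek eA].
    apply/existsP; exists e; rewrite in_setD eA /=.
    by move: ek; rewrite inEk => /andP[eE /eqP ek]; rewrite inES eE ek kS eqxx.
  case: (boolP [exists k in S :\: S', d k == +oo%E]) => [/existsP[k /andP[kS dk]]|].
    have : mu <= cap k by rewrite /cap (eqP dk) lemaxl.
    have : cap k <= \sum_(k in S :\: S') cap k.
      by rewrite (bigD1 k) //= lerDl sumr_ge0.
    lra.
  move=> /existsPn nk.
  have ek : forall k, k \in S :\: S' -> d k = (cap k)%:E.
    move=> k kS; have := nk k; rewrite kS /= /cap.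
    by case: (d k) (d0 k).
  move: c; rewrite /sumd (eq_bigr _ ek) sumEFin -EFinD lee_fin; lra.
have [y [y0 yD y1 y2 ymu]] := PI (r1_polym wP sD) (r2_polym (ESS S) cap0) cutA.
exists y; split => //; split; first by move=> e _.
split; first split.
- by move=> e eE; apply: addr_ge0 => //; case: wP => /(_ e eE).
- move=> j F sF; rewrite big_split /= (sum_off F yD).
  have sFD : F :&: ESS S \subset ESS S by apply: subsetIr.
  have sFE : F \subset EE := subset_trans sF (Ej_sub j).
  have h1 := y1 _ sFD.
  have [Z [sZ1 sZ2 e1 H]] := r1_spec w (subset_trans sFD sD).
  have h2 := H F (subsetIl _ _) sFE.
  move: h1 h2; rewrite e1 /phi (f_Ej sF); lra.
- move=> k; case dk : (d k) => [r| |]; last by have := d0 k; rewrite dk.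
    rewrite lee_fin (sum_off _ yD).
    have sKD : Ekk k :&: ESS S \subset ESS S by apply: subsetIr.
    apply: le_trans (y2 _ sKD) _.
    rewrite /r2 (bigD1 k) //= big1 ?addr0 => [|k' k'k].
      have := cap0 k; rewrite /cap dk; case: ifP => // _; lra.
    case: ifP => // /existsP[e /andP[]]; rewrite inE inEk => /andP[/andP[_ /eqP ->] _].
    by rewrite eq_sym (negbTE k'k).
  by rewrite leey.
Qed.

Local Open Scope ereal_scope.

Definition term (w : Edg -> R) (d : Prt -> \bar R) S T :=
  (ff (ESS T) - sumx (xw E0 w) T)%:E + sumd d (S :\: T).

Definition gs (w : Edg -> R) (d : Prt -> \bar R) S := gsimple E0 f0 (xw E0 w) d S.

Lemma gsE w d S : gs w d S = \big[Order.min/+oo]_(T : {set Prt} | T \subset S) term w d S T.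
Proof. by []. Qed.

Lemma gs_le w d S T : T \subset S -> gs w d S <= term w d S T.
Proof. by move=> sT; rewrite gsE; exact: (bigmin_le_cond _ (fun T => term w d S T) sT). Qed.

Lemma gs_attain w d S : exists2 T : {set Prt}, T \subset S & gs w d S = term w d S T.
Proof.
rewrite gsE; have [T0 T0S ->] := @eq_bigmin _ _ _ +oo S (fun T : {set Prt} => T \subset S) (term w d S) (subxx S) (fun _ _ => leey _).
by exists T0.
Qed.

Lemma gs_glb w d S v : (forall T : {set Prt}, T \subset S -> v <= term w d S T) -> v <= gs w d S.
Proof. by move=> H; have [T sT ->] := gs_attain w d S; apply: H. Qed.

Lemma sumd_split (d : Prt -> \bar R) S S' T : T \subset S' -> S' \subset S ->
  sumd d (S :\: T) = sumd d (S' :\: T) + sumd d (S :\: S').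
Proof.
move=> sT sS; rewrite /sumd (big_setID S') /=; congr (_ + _).
  apply: eq_bigl => k; rewrite !inE.
  by case kS' : (k \in S'); [rewrite (subsetP sS _ kS') !andbT | rewrite !andbF].
apply: eq_bigl => k; rewrite !inE.
case kS' : (k \in S'); rewrite /= ?andbF ?andbT //.
by have := subsetP sT k; case: (k \in T) => // /(_ erefl); rewrite kS'.
Qed.

Lemma gs_sub w d S S' : S' \subset S -> gs w d S <= gs w d S' + sumd d (S :\: S').
Proof.
move=> sS; have [T sT ->] := gs_attain w d S'.
apply: le_trans (gs_le w d (subset_trans sT sS)) _.
by rewrite /term (sumd_split d sT sS) addeA.
Qed.

Lemma sumd_le (d d' : Prt -> \bar R) S : (forall k, d' k <= d k) -> sumd d' S <= sumd d S.
Proof. by move=> H; apply: lee_sum => k _. Qed.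

Lemma gs_mono w d d' S : (forall k, d' k <= d k) -> gs w d' S <= gs w d S.
Proof.
move=> H; apply: gs_glb => T sT; apply: le_trans (gs_le w d' sT) _.
by apply: leeD2l; apply: sumd_le.
Qed.

Definition J (w : Edg -> R) (d : Prt -> \bar R) :=
  forall S Z, ESS S \subset Z -> Z \subset EE -> gs w d S <= (phi w Z)%:E.

Lemma J_mono w d d' : J w d -> (forall k, d' k <= d k) -> J w d'.
Proof. by move=> Jd H S Z s1 s2; apply: le_trans (Jd S Z s1 s2); apply: gs_mono. Qed.

Lemma J_g w d S : J w d -> g E0 f0 (xw E0 w) d S = gsimple E0 f0 (xw E0 w) d S.
Proof.
move=> Jd; apply/eqP; rewrite eq_le; apply/andP; split.
  apply: le_bigmin2 => T sT; apply: leeD2r.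
  by apply: (bigmin_le_cond _ (fun S'' : {set Prt} => (ff (ESS S'') - sumx (xw E0 w) S'')%:E) (subxx T)).
apply: le_bigmin; first exact: leey.
move=> T sT; apply: le_trans (gs_sub w d sT) _; apply: leeD2r.
apply: le_bigmin; first exact: leey.
move=> U sTU; rewrite sumx_xw.
exact: (Jd T (ESS U) (ES_sub_mono sTU) (ES_sub U)).
Qed.

Variable B : 'I_n -> R.
Variable bid : 'I_(n+m) -> R.
Variable eps : R.
Hypothesis B0 : forall i, (0 <= B i)%R.
Hypothesis eps0 : (0 < eps)%R.

Local Notation Bx := (Bext B).
Local Notation dm := (dem B bid).

Lemma yminus (x : R) : +oo - x%:E = +oo :> \bar R.
Proof. by []. Qed.

Lemma ymul (x : R) : (0 < x)%R -> +oo * x%:E = +oo :> \bar R.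
Proof. by move=> x0; rewrite mulyr gtr0_sg // mul1e. Qed.

Lemma dem_ge0 (c p : Prt -> R) k : (0 <= c k)%R -> (p k)%:E <= Bx k -> 0 <= dm c p k.
Proof.
move=> c0 pB; rewrite /dem; case: eqP => [_|/eqP cn0]; first exact: leey.
case: ifP => _ //; apply: mule_ge0; last by rewrite lee_fin invr_ge0.
by rewrite sube_ge0 // orbC.
Qed.

Lemma dem_other (c p p' : Prt -> R) k : p' k = p k -> dm c p' k = dm c p k.
Proof. by move=> e; rewrite /dem e. Qed.

Lemma dem_clinch (c p : Prt -> R) i (X : R) :
  (0 <= c i)%R -> (p i)%:E <= Bx i -> (0 <= X)%R -> X%:E <= dm c p i ->
  let p' := fun k => if k == i then (p k + c i * X)%R else p k in
  dm c p' i = dm c p i - X%:E /\ (p' i)%:E <= Bx i.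
Proof.
move=> c0 pB X0 Xd p'; rewrite /p' /dem !eqxx; move: Xd; rewrite /dem.
case: eqP => [->|/eqP cn0].
  by rewrite mul0r addr0.
have cp : (0 < c i)%R by rewrite lt_def cn0.
case: ifP => _; last first.
  move=> X0'; have -> : X = 0%R by apply/le_anti; rewrite X0 andbT -lee_fin.
  by rewrite mulr0 addr0 sube0.
rewrite /Bext; case: (split i) => [b|b].
  rewrite -!EFinB -!EFinM !lee_fin => h; split.
    by congr EFin; field; rewrite gt_eqF.
  move: h; rewrite ler_pdivlMr // mulrC; lra.
move=> _; rewrite !yminus !ymul ?invr_gt0 //; split; [by [] | exact: leey].
Qed.

Lemma dem_price (c p : Prt -> R) l :
  (0 <= c l)%R -> (p l)%:E <= Bx l ->
  let c' := fun k => if k == l then (c k + eps)%R else c k in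
  dm c' p l <= dm c p l /\ forall k, k != l -> dm c' p k = dm c p k.
Proof.
move=> c0 pB c'; split; last first.
  by move=> k kl; rewrite /dem /c' (negbTE kl).
have hge := dem_ge0 c0 pB.
rewrite /dem /c' eqxx.
have [->|cn0] := eqVneq (c l) 0%R; first exact: leey.
have cp : (0 < c l)%R by rewrite lt_def cn0.
have cep : (0 < c l + eps)%R by apply: addr_gt0.
rewrite gt_eqF //; case: ifP => h; last by move: hge; rewrite /dem (negbTE cn0).
have -> : (c l < bid l)%R by apply: lt_trans h; rewrite ltrDl.
apply: lee_pmul => //.
- by rewrite sube_ge0 // orbC.
- by rewrite lee_fin invr_ge0 ltW.
- by rewrite lee_fin lef_pV2 ?posrE // lerDl ltW.
Qed.

Lemma inP_le (w1 w2 : Edg -> R) : inP E0 f0 w1 ->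
  (forall e, e \in EE -> (0 <= w2 e)%R /\ (w2 e <= w1 e)%R) -> inP E0 f0 w2.
Proof.
move=> [_ h1] H; split; first by move=> e /H[].
move=> j F sF; apply: le_trans (h1 j F sF); apply: ler_sum => e eF.
by have [] := H e (subsetP (subset_trans sF (Ej_sub j)) e eF).
Qed.

Lemma sum_sub_le (y : Edg -> R) A Z : (forall e, e \in EE -> (0 <= y e)%R) ->
  A \subset Z -> Z \subset EE -> (\sum_(e in A) y e <= \sum_(e in Z) y e)%R.
Proof.
move=> y0 sAZ sZ; rewrite [X in (_ <= X)%R](big_setID A) /=.
rewrite (setIidPr sAZ) lerDl; apply: sumr_ge0 => e; rewrite inE => /andP[_ eZ].
by apply: y0; apply: (subsetP sZ).
Qed.

Lemma sum_disj (y : Edg -> R) A C : A :&: C = set0 ->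
  (\sum_(e in A :|: C) y e = \sum_(e in A) y e + \sum_(e in C) y e)%R.
Proof. by move=> h; rewrite -sum_mod h big_set0 addr0. Qed.

Lemma sum_ite (i : Prt) (X : R) T :
  (\sum_(k in T) (if k == i then X else 0) = if i \in T then X else 0)%R.
Proof.
case: ifP => iT; last by rewrite big1 // => k kT; case: eqP => // ki; move: kT; rewrite ki iT.
by rewrite (bigD1 i) //= eqxx big1 ?addr0 // => k /andP[_ /negbTE ->].
Qed.

Lemma inPwd0 (w : Edg -> R) (d : Prt -> \bar R) : inP E0 f0 w -> (forall k, 0 <= d k) ->
  inPwd E0 f0 w d (fun _ => 0%R).
Proof.
move=> wP d0; split; first by [].
split; last by move=> k; rewrite big1_eq; exact: d0.
by apply: (inP_le wP) => e eE; rewrite addr0 lexx; split => //; case: wP => /(_ e eE).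
Qed.

Lemma clinch_u (w : Edg -> R) (d : Prt -> \bar R) i xi :
  clinchable E0 f0 w d i xi -> forall y, inPwd E0 f0 w d y -> (forall e, e \in Ekk i -> y e = 0%R) ->
  exists y'', [/\ inPwd E0 f0 w d y'', forall e, e \in Ekk i -> y'' e = xi e &
     forall k, k != i -> (\sum_(e in Ekk k) y'' e = \sum_(e in Ekk k) y e)%R].
Proof.
move=> cl y yP yi.
have : inPi E0 f0 w d i (fun _ => 0%R) (fun k => (\sum_(e in Ekk k) y e)%R).
  split.
    move=> k _; apply: sumr_ge0 => e ek; case: yP => y0 _; apply: y0.
    exact: (subsetP (Ek_sub k)).
  by exists y; split.
move=> /(proj2 (cl _)) [_ [y'' [h1 [h2 h3]]]].
by exists y''; split.
Qed.

Definition Inv (s : state R n m) :=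
  [/\ inP E0 f0 (st_w s), forall k, (0 <= st_c s k)%R, forall k, (st_p s k)%:E <= Bx k,
      forall k, st_d s k = dm (st_c s) (st_p s) k & J (st_w s) (st_d s)].

Lemma Inv_d0 s : Inv s -> forall k, 0 <= st_d s k.
Proof. by move=> [_ c0 pB dE _] k; rewrite dE; apply: dem_ge0. Qed.

Lemma ereal_re (a b r : \bar R) (x : R) : a + ((b - x%:E) + r) = a + (b + r) - x%:E.
Proof. by rewrite (addeAC b) addeA. Qed.

Lemma Inv_clinch i s s' : Inv s -> clinch1 E0 f0 B bid i s s' -> Inv s'.
Proof.
move=> Is; have d0 := Inv_d0 Is; move: Is => [wP c0 pB dE Js].
move=> [xi [[[xi0 xiz] [cl _]] [ep [ew [ed [_ [ec _]]]]]]].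
set w := st_w s in wP Js d0 cl ew *; set d := st_d s in dE Js d0 cl ed *.
set c := st_c s in c0 dE ep ed ec *; set p := st_p s in pB dE ep ed *.
pose X := (\sum_(e in Ekk i) xi e)%R.
have [y0 [y0P y0i _]] := clinch_u cl (inPwd0 wP d0) (fun _ _ => erefl).
have X0 : (0 <= X)%R by apply: sumr_ge0.
have Xd : X%:E <= d i.
  by case: y0P => _ [_ /(_ i)]; rewrite (eq_bigr _ y0i).
have wP' : inP E0 f0 (fun e => w e + xi e)%R.
  case: y0P => y00 [y0w _]; apply: (inP_le y0w) => e eE; split.
    apply: addr_ge0; first by case: wP => /(_ e eE).
    by case: (boolP (e \in Ekk i)) => [/xi0 //|/xiz ->].
  rewrite lerD2l; case: (boolP (e \in Ekk i)) => [/y0i -> //|/xiz ->].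
  exact: y00.
have Xd' : X%:E <= dm c p i by rewrite -dE.
have [dc pc] := dem_clinch (c0 i) (pB i) X0 Xd'.
rewrite /Inv ed ep ew ec; split => //.
- move=> k; case: eqP => [->|_]; last exact: pB.
  by move: pc; rewrite /= eqxx.
- set p' := (fun k => _) in dc pc *.
  have d'o : forall k, k != i -> dm c p' k = d k.
    by move=> k ki; rewrite dE; apply: dem_other; rewrite /p' (negbTE ki).
  have d'i : dm c p' i = d i - X%:E by rewrite dc dE.
  move=> S Z sSZ sZE.
  have phiE : phi (fun e => w e + xi e)%R Z = (phi w Z - \sum_(e in Z) xi e)%R.
    by rewrite /phi big_split /= opprD addrA.
  have xwE : forall k, xw E0 (fun e => w e + xi e)%R k = (xw E0 w k + (if k == i then X else 0))%R.
    move=> k; rewrite /xw big_split /=; congr (_ + _)%R; case: eqP => [->//|/eqP ki].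
    rewrite big1 // => e ek; apply: xiz; rewrite inEk; move: ek; rewrite inEk => /andP[_ /eqP ->].
    by rewrite (negbTE ki) andbF.
  have sumxE : forall T, sumx (xw E0 (fun e => w e + xi e)%R) T = (sumx (xw E0 w) T + (if i \in T then X else 0))%R.
    by move=> T; rewrite /sumx (eq_bigr _ (fun k _ => xwE k)) big_split /= sum_ite.
  case iS : (i \in S).
  + have termE : forall T, T \subset S -> term (fun e => w e + xi e)%R (dm c p') S T = term w d S T - X%:E.
      move=> T sT; rewrite /term sumxE.
      case iT : (i \in T).
        have -> : sumd (dm c p') (S :\: T) = sumd d (S :\: T).
          apply: eq_bigr => k; rewrite in_setD => /andP[kT _]; apply: d'o.
          by apply: contraNneq kT => ->.
        by rewrite opprD addrA EFinB addeAC.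
      have iST : i \in S :\: T by rewrite in_setD iT iS.
      rewrite addr0 /sumd (bigD1 i iST) [X in _ = _ + X - _](bigD1 i iST) /= d'i.
      rewrite (eq_bigr (fun k => d k)) => [|k /andP[_ ki]]; last exact: d'o.
      exact: ereal_re.
    have [T0 sT0 gsE] := gs_attain w d S.
    apply: le_trans (gs_le _ _ sT0) _; rewrite termE // -gsE phiE EFinB.
    have -> : (\sum_(e in Z) xi e)%R = X.
      rewrite (sum_off Z (D := Ekk i) xiz) (setIidPr _) //.
      apply: subset_trans sSZ; apply/subsetP => e; rewrite inEk inES => /andP[-> /eqP ->].
      by rewrite iS.
    by apply: leeB => //; apply: Js.
  + have termE : forall T, T \subset S -> term (fun e => w e + xi e)%R (dm c p') S T = term w d S T.
      move=> T sT; rewrite /term sumxE.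
      have -> : (i \in T) = false by apply/negP => /(subsetP sT); rewrite iS.
      rewrite addr0; congr (_ + _); apply: eq_bigr => k; rewrite in_setD => /andP[_ kS].
      by apply: d'o; apply: contraTneq kS => ->; rewrite iS.
    have hle : gs (fun e => w e + xi e)%R (dm c p') S <= gs w d S.
      by have [T0 sT0 ->] := gs_attain w d S; rewrite -termE //; apply: gs_le.
    apply: le_trans hle _; rewrite phiE.
    case gE : (gs w d S) => [mu||]; last exact: leNye.
      have cutS : forall S', S' \subset S -> forall Z', ESS S' \subset Z' -> Z' \subset EE ->
          mu%:E <= (phi w Z')%:E + sumd d (S :\: S').
        move=> S' sS' Z' s1 s2; rewrite -gE; apply: le_trans (gs_sub w d sS') _.
        by apply: leeD2r; apply: Js.
      have [y [yP yoff ymu]] := MF (S := S) wP d0 cutS.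
      have yi : forall e, e \in Ekk i -> y e = 0%R.
        move=> e ei; apply: yoff; rewrite inES; move: ei; rewrite inEk => /andP[-> /eqP ->].
        by rewrite iS.
      have [y'' [y''P y''i y''k]] := clinch_u cl yP yi.
      have hZ := inP_sum (proj1 (proj2 y''P)) sZE.
      have sU : ESS S :|: (Z :&: Ekk i) \subset Z by rewrite subUset sSZ subsetIl.
      have h1 := sum_sub_le (proj1 y''P) sU sZE.
      have dj : ESS S :&: (Z :&: Ekk i) = set0.
        apply/setP => e; rewrite in_set0 !in_setI inES inEk.
        by case: eqP => [->|_]; rewrite ?iS ?andbF ?andFb.
      rewrite (sum_disj _ dj) in h1.
      have h3 : (\sum_(e in ESS S) y'' e = \sum_(e in ESS S) y e)%R.
        rewrite !sum_ES; apply: eq_bigr => k kS; apply: y''k.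
        by apply: contraTneq kS => ->; rewrite iS.
      have h4 : (\sum_(e in Z :&: Ekk i) y'' e = \sum_(e in Z) xi e)%R.
        rewrite (sum_off Z (D := Ekk i) xiz); apply: eq_bigr => e; rewrite inE => /andP[_ ei].
        exact: y''i.
      rewrite big_split /= in hZ.
      rewrite lee_fin /phi; lra.
    have := gs_le w d (subxx S); rewrite gE /term setDv /sumd big_set0 adde0.
    by [].
Qed.

Lemma Inv_price s1 s2 : Inv s1 -> price_step B bid eps s1 s2 -> Inv s2.
Proof.
move=> [wP c0 pB dE Js] [ew [ep [_ [ec [ed _]]]]].
set l := st_l s1 in ec ed *.
have [dl dother] := dem_price (c0 l) (pB l).
rewrite /Inv ew ep ec ed; split => //.
- move=> k; case: eqP => _; last exact: c0.
  by apply: addr_ge0 => //; apply: ltW.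
- move=> k; have [->|kl] := eqVneq k l; first by [].

  by rewrite dE (dother k kl).
- apply: (J_mono Js) => k; have [->|kl] := eqVneq k l.
    by rewrite dE.
  by [].
Qed.

Lemma Inv_init (l0 : Prt) :
  Inv (State (fun _ => 0%R) (fun _ => 0%R) (fun _ => 0%R) (fun _ => 0%R) (fun _ => +oo) l0).
Proof.
split => /=.
- split => // j F sF; rewrite big1_eq; exact: fext_ge0.
- by [].
- move=> k; rewrite /Bext; case: (split k) => [b|b]; last exact: leey.
  by rewrite lee_fin.
- by move=> k; rewrite /dem eqxx.
- move=> S Z sSZ sZE; apply: le_trans (gs_le _ _ (subxx S)) _.
  rewrite /term setDv /sumd big_set0 adde0 sumx_xw big1_eq subr0.
  by rewrite /phi big1_eq subr0 lee_fin; apply: f_mon.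
Qed.

Lemma Inv_all s s' : Inv s -> clinch_all E0 f0 B bid s s' -> Inv s'.
Proof.
move=> Is [seqs [h0 [hN hstep]]].
suff : forall k, (k <= n + m)%N -> Inv (seqs k) by move/(_ (n + m)%N (leqnn _)); rewrite hN.
elim => [|k IH] hk; first by rewrite h0.
exact: (Inv_clinch (IH (ltnW hk)) (hstep (Ordinal hk))).
Qed.

Lemma Inv_iter s : iter_start E0 f0 B bid eps s -> Inv s.
Proof.
elim => [l0 _|s0 s1 s2 _ IH _ hc hp]; first exact: Inv_init.
exact: Inv_price (Inv_all IH hc) hp.
Qed.

Lemma main_result s : iter_start E0 f0 B bid eps s -> forall S,
  g E0 f0 (xw E0 (st_w s)) (st_d s) S = gsimple E0 f0 (xw E0 (st_w s)) (st_d s) S.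
Proof. by move=> h S; have [_ _ _ _ Js] := Inv_iter h; apply: J_g. Qed.

End Market.


Theorem proposition3p8 (R : realFieldType) (n m : nat)
  (E0 : {set 'I_n * 'I_m}) (f0 : 'I_m -> {set 'I_n * 'I_m} -> R)
  (B : 'I_n -> R) (bid : 'I_(n+m) -> R) (eps : R) :
  (forall j, f0 j set0 = 0) ->
  (forall j (F : {set 'I_n * 'I_m}), F \subset E0j E0 j -> 0 <= f0 j F) ->
  (forall j, monotone_on (E0j E0 j) (f0 j)) ->
  (forall j, submodular_on (E0j E0 j) (f0 j)) ->
  (forall i, 0 <= B i) ->
  0 < eps ->
  (forall k, exists q : nat, (0 < q)%N /\ bid k = q%:R * eps) ->
  forall s : state R n m,
    iter_start E0 f0 B bid eps s ->
    (exists k, st_d s k != 0%E) ->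
    forall S : {set 'I_(n+m)},
      g E0 f0 (xw E0 (st_w s)) (st_d s) S = gsimple E0 f0 (xw E0 (st_w s)) (st_d s) S.
Proof.
move=> h1 h2 h3 h4 h5 h6 _ s hs _ S.
exact: (main_result h1 h2 h3 h4 h5 h6 hs).
Qed.
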